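(* Let $G^*=(V^*,E^* )$ be a weakly connected digraph, let $v_0\in V^*$, and let $L_0,\dots,L_\ell$ be the layers defined below; set $L_{\ell+1}=\emptyset$. Then for every directed path $Q$ in $G^*$ there exists $j\in\{0,\dots,\ell\}$ such that all vertices of $Q$ lie in $L_j\cup L_{j+1}$. In particular, if $G^*$ contains an $s$-$t$ dipath, then for some $j$ the subgraph induced by $L_j\cup L_{j+1}$ contains an $s$-$t$ dipath.
   Context: Layers: $L_0$ is the set of vertices of $V^*$ reachable from $v_0$ in $G^*$. For $j\ge1$: if $j$ is odd, $L_j$ is the set of vertices $v\in V^*\setminus\bigcup_{j'<j}L_{j'}$ that can reach some vertex of $L_{j-1}$ in $G^*$; if $j$ is even, $L_j$ is the set of vertices $v\in V^*\setminus\bigcup_{j'<j}L_{j'}$ reachable from some vertex of $L_{j-1}$ in $G^*$. The process continues until all vertices are covered; $\ell$ is the index of the last layer. *)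

(* Defs.v *)
(* Finite digraph G* = (T, e) with e : rel T (arc x -> y iff e x y). *)
From mathcomp Require Import all_boot.
Set Implicit Arguments. Unset Strict Implicit. Unset Printing Implicit Defensive.

Section Layers.
Variables (T : finType) (e : rel T).

Definition weakly_connected : Prop :=
  forall x y : T, connect (fun a b => e a b || e b a) x y.

(* layers_upto v0 n = the list [:: L_n; L_{n-1}; ...; L_0] *)
Fixpoint layers_upto (v0 : T) (n : nat) : seq {set T} :=
  match n with
  | 0 => [:: [set v | connect e v0 v]]
  | n'.+1 =>
      let prev := layers_upto v0 n' in
      let Lprev := head set0 prev in
      let covered := \bigcup_(A <- prev) A in
      let Ln := if odd n
                then [set v | (v \notin covered) && [exists u in Lprev, connect e v u]]
                else [set v | (v \notin covered) && [exists u in Lprev, connect e u v]] in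
      Ln :: prev
  end.

Definition layer (v0 : T) (j : nat) : {set T} := head set0 (layers_upto v0 j).

Definition covered_upto (v0 : T) (j : nat) : {set T} := \bigcup_(i < j.+1) layer v0 i.

Definition last_layer_index (v0 : T) (l : nat) : Prop :=
  covered_upto v0 l = [set: T] /\ forall j, j < l -> covered_upto v0 j != [set: T].

Definition dipath (x : T) (p : seq T) : bool := path e x p && uniq (x :: p).

End Layers.

(* Main.v *)
Require Import Defs.
From mathcomp Require Import all_boot.
Set Implicit Arguments. Unset Strict Implicit. Unset Printing Implicit Defensive.

Section Aux.
Variables (T : finType) (e : rel T) (v0 : T).

Lemma cover_eq j : \bigcup_(A <- layers_upto e v0 j) A = covered_upto e v0 j.
Proof.
elim: j => [|j IH].
  by rewrite /covered_upto big_ord_recr big_ord0 /= big_cons big_nil set0U setU0.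
rewrite /covered_upto big_ord_recr /=.
rewrite big_cons -/(covered_upto e v0 j) -IH setUC.
by rewrite /layer.
Qed.

Lemma layerS j : layer e v0 j.+1 =
  if odd j.+1
  then [set v | (v \notin covered_upto e v0 j) && [exists u in layer e v0 j, connect e v u]]
  else [set v | (v \notin covered_upto e v0 j) && [exists u in layer e v0 j, connect e u v]].
Proof. by rewrite /layer /= cover_eq. Qed.

Lemma layer0 : layer e v0 0 = [set v | connect e v0 v].
Proof. by []. Qed.

Lemma cov_in v i n : v \in layer e v0 i -> i <= n -> v \in covered_upto e v0 n.
Proof.
move=> vi hin; have hin' : i < n.+1 by []. 
apply/bigcupP; exists (Ordinal hin') => //.
Qed.

Lemma covP v n : v \in covered_upto e v0 n -> exists2 i, i <= n & v \in layer e v0 i.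
Proof. by move/bigcupP=> [i _ vi]; exists (val i); rewrite // -ltnS ltn_ord. Qed.

Lemma layer_notcov v k : v \in layer e v0 k.+1 -> v \notin covered_upto e v0 k.
Proof. by rewrite layerS; case: ifP => _; rewrite inE => /andP[]. Qed.

Lemma layer_uniq v i k : v \in layer e v0 i -> v \in layer e v0 k -> i = k.
Proof.
wlog: i k / i <= k => [H vi vk|].
  by case: (leqP i k) => h; [apply: H|apply/esym; apply: H => //; apply: ltnW].
move=> ik vi; case: k ik => [|k] ik vk; first by case: i ik vi.
case: (ltngtP i k.+1) ik => // ik _.
by have := layer_notcov vk; rewrite (cov_in vi) // -ltnS.
Qed.

Lemma cov_le v n b : v \in covered_upto e v0 n -> v \in layer e v0 b -> b <= n.
Proof. by move=> /covP[i hi vi] vb; rewrite -(layer_uniq vi vb). Qed.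

Lemma arcA u v a : e u v -> u \in layer e v0 a -> ~~ odd a -> v \in covered_upto e v0 a.
Proof.
move=> uv; case: a => [|a].
  rewrite layer0 inE => h _; apply: (@cov_in v 0) => //.
  by rewrite layer0 inE (connect_trans h) // connect1.
rewrite layerS => + hodd; rewrite (negbTE hodd) inE => /andP[_ /existsP[w /andP[wl wu]]].
case: (boolP (v \in covered_upto e v0 a)) => hv.
  by move: hv => /covP[i hi vi]; apply: (cov_in vi); apply: leqW.
apply: (@cov_in v a.+1) => //; rewrite layerS (negbTE hodd) inE hv /=.
by apply/existsP; exists w; rewrite wl (connect_trans wu) // connect1.
Qed.

Lemma arcB u v a : e u v -> u \in layer e v0 a -> odd a -> v \in covered_upto e v0 a.+1.
Proof.
move=> uv ua hodd.
case: (boolP (v \in covered_upto e v0 a)) => hv.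
  by move: hv => /covP[i hi vi]; apply: (cov_in vi); apply: leqW.
apply: (@cov_in v a.+1) => //; rewrite layerS /= hodd /= inE hv /=.
by apply/existsP; exists u; rewrite ua connect1.
Qed.

Lemma arcC u v b : e u v -> v \in layer e v0 b -> odd b -> u \in covered_upto e v0 b.
Proof.
move=> uv; case: b => [//|b].
rewrite layerS => + hodd; rewrite hodd inE => /andP[_ /existsP[w /andP[wl vw]]].
case: (boolP (u \in covered_upto e v0 b)) => hu.
  by move: hu => /covP[i hi ui]; apply: (cov_in ui); apply: leqW.
apply: (@cov_in u b.+1) => //; rewrite layerS hodd inE hu /=.
by apply/existsP; exists w; rewrite wl (connect_trans _ vw) // connect1.
Qed.

Lemma arcD u v b : e u v -> v \in layer e v0 b -> ~~ odd b -> u \in covered_upto e v0 b.+1.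
Proof.
move=> uv vb hodd.
case: (boolP (u \in covered_upto e v0 b)) => hu.
  by move: hu => /covP[i hi ui]; apply: (cov_in ui); apply: leqW.
apply: (@cov_in u b.+1) => //; rewrite layerS /= (negbTE hodd) /= inE hu /=.
by apply/existsP; exists v; rewrite vb connect1.
Qed.

Lemma arc u v a b : e u v -> u \in layer e v0 a -> v \in layer e v0 b ->
  (~~ odd a -> b = a) /\ (odd a -> [\/ b = a, b.+1 = a | b = a.+1]).
Proof.
move=> uv ua vb; split => ha.
  have h1 := cov_le (arcA uv ua ha) vb.
  case hb: (odd b).
    have h2 := cov_le (arcC uv vb hb) ua.
    by apply/eqP; rewrite eqn_leq h1 h2.
  have h2 := cov_le (arcD uv vb (negbT hb)) ua.
  case: (ltngtP b a) h1 => // hlt _.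
  have ea : a = b.+1 by apply/eqP; rewrite eqn_leq h2 hlt.
  by move: ha; rewrite ea /= hb.
have h1 := cov_le (arcB uv ua ha) vb.
case hb: (odd b).
  have h2 := cov_le (arcC uv vb hb) ua.
  by constructor 1; apply/eqP; rewrite eqn_leq h2 andbT -ltnS ltn_neqAle h1 andbT;
     apply/negP => /eqP eb; move: hb; rewrite eb /= ha.
have h2 := cov_le (arcD uv vb (negbT hb)) ua.
case: (ltngtP b a) => hc.
- by constructor 2; apply/eqP; rewrite eqn_leq h2 hc.
- by constructor 3; apply/eqP; rewrite eqn_leq h1 hc.
- by constructor 1.
Qed.

Hypothesis allcov : forall v, exists k, v \in layer e v0 k.

Lemma path_even x p k : path e x p -> x \in layer e v0 k -> ~~ odd k ->
  {subset x :: p <= layer e v0 k}.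
Proof.
elim: p x => [|y p IH] x /=.
  by move=> _ xk _ z; rewrite inE => /eqP->.
move=> /andP[xy py] xk hk.
have [b yb] := allcov y.
have eb := (arc xy xk yb).1 hk; subst b.
move=> z; rewrite inE => /orP[/eqP->//|]; exact: IH.
Qed.

Lemma path_odd x p k : path e x p -> x \in layer e v0 k -> odd k ->
  {subset x :: p <= layer e v0 k :|: layer e v0 k.+1} \/
  {subset x :: p <= layer e v0 k.-1 :|: layer e v0 k}.
Proof.
elim: p x => [|y p IH] x /=.
  by move=> _ xk _; left => z; rewrite inE => /eqP->; rewrite inE xk.
move=> /andP[xy py] xk hk.
have [b yb] := allcov y.
case: ((arc xy xk yb).2 hk) => eb; [subst b|subst k|subst b].
- case: (IH y py yb hk) => H; [left|right] => z; rewrite inE => /orP[/eqP->|/H//];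
    by rewrite inE xk ?orbT.
- have hev : ~~ odd b by move: hk => /=; case: (odd b).
  have H := path_even py yb hev.
  right => z; rewrite inE => /orP[/eqP->|/H]; first by rewrite inE xk orbT.
  by move=> zb; rewrite inE zb.
- have hev : ~~ odd k.+1 by rewrite /= hk.
  have H := path_even py yb hev.
  left => z; rewrite inE => /orP[/eqP->|/H]; first by rewrite inE xk.
  by move=> zb; rewrite inE zb orbT.
Qed.

End Aux.

Theorem mainTheorem8 (T : finType) (e : rel T) (v0 : T) (l : nat) :
  weakly_connected e ->
  last_layer_index e v0 l ->
  (forall (x : T) (p : seq T), dipath e x p ->
     exists j, j <= l /\
       {subset x :: p <= layer e v0 j :|: layer e v0 j.+1}) /\
  (forall s t : T,
     (exists p : seq T, dipath e s p /\ last s p = t) ->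
     exists j, j <= l /\
       exists p : seq T, [/\ dipath e s p, last s p = t &
         {subset s :: p <= layer e v0 j :|: layer e v0 j.+1}]).
Proof.
move=> _ [hl _].
have inl v : exists2 k, k <= l & v \in layer e v0 k.
  by apply: covP; rewrite hl inE.
have allcov v : exists k, v \in layer e v0 k by have [k _ h] := inl v; exists k.
have part1 : forall (x : T) (p : seq T), dipath e x p ->
     exists j, j <= l /\ {subset x :: p <= layer e v0 j :|: layer e v0 j.+1}.
  move=> x p /andP[px _].
  have [k kl xk] := inl x.
  case hk: (odd k).
    case: (path_odd allcov px xk hk) => H.
      by exists k; split.
    exists k.-1; split; first by apply: leq_trans (leq_pred k) kl.
    by move: H; case: k hk {kl xk} => [//|k] _.
  exists k; split => // z /(path_even allcov px xk (negbT hk)) zk.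
  by rewrite inE zk.
split => //.
move=> s t [p [dp lp]].
have [j [jl H]] := part1 s p dp.
by exists j; split => //; exists p; split.
Qed.
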